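(* Let $\Gamma$ be a finite simple graph and $\alpha\in[0,1/3)$. If $\mathcal C_1$ and $\mathcal C_2$ are two distinct $\alpha$-quasi-equivalence classes of $\Gamma$, then $\mathcal C_1\cap\mathcal C_2=\emptyset$.
   Context: For a vertex $v$ of a simple graph $\Gamma$, $\mathcal N_\Gamma(v)$ is the set of vertices adjacent to $v$; $A\Delta B=(A\cup B)\setminus(A\cap B)$. For $\alpha\in[0,1/3)$, a set $\mathcal C$ of vertices of $\Gamma$ is an $\alpha$-quasi-equivalence class of $\Gamma$ if (1) $|(\mathcal N_\Gamma(v)\cup\{v\})\Delta\mathcal C|\le\alpha|\mathcal C|$ for every $v\in\mathcal C$, and (2) $|\mathcal N_\Gamma(v)\cap\mathcal C|<(1-3\alpha)|\mathcal C|$ for every vertex $v\notin\mathcal C$. *)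

(* Defs.v *)
From HB Require Import structures.
From mathcomp Require Import all_boot all_order all_algebra.
Set Implicit Arguments. Unset Strict Implicit. Unset Printing Implicit Defensive.
Import Order.TTheory GRing.Theory Num.Theory.
Local Open Scope ring_scope.

Definition simple_graph (T : finType) (e : rel T) : Prop :=
  symmetric e /\ irreflexive e.

Definition nbhd (T : finType) (e : rel T) (v : T) : {set T} := [set w | e v w].

Definition symdiff (T : finType) (A B : {set T}) : {set T} :=
  (A :|: B) :\: (A :&: B).

Definition quasi_equiv_class (R : realFieldType) (T : finType) (e : rel T)
    (alpha : R) (C : {set T}) : Prop :=
  (forall v, v \in C ->
     (#|symdiff (v |: nbhd e v) C|%:R <= alpha * #|C|%:R)) /\
  (forall v, v \notin C ->
     (#|nbhd e v :&: C|%:R < (1 - 3 * alpha) * #|C|%:R)).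

(* Main.v *)
Require Import Defs.
From HB Require Import structures.
From mathcomp Require Import all_boot all_order all_algebra.
From mathcomp Require Import zify ring lra.
Set Implicit Arguments. Unset Strict Implicit.
Import Order.TTheory GRing.Theory Num.Theory.
Local Open Scope ring_scope.

Lemma card_sd (T : finType) (A B : {set T}) :
  #|symdiff A B| = (#|A :\: B| + #|B :\: A|)%N.
Proof.
have -> : symdiff A B = (A :\: B) :|: (B :\: A).
  by apply/setP => x; rewrite /symdiff !inE; case: (x \in A); case: (x \in B).
rewrite cardsU; have -> : (A :\: B) :&: (B :\: A) = set0.
  by apply/setP => x; rewrite !inE; case: (x \in A); case: (x \in B).
by rewrite cards0 subn0.
Qed.

Lemma tri (T : finType) (A B C : {set T}) :
  (#|A :\: C| <= #|A :\: B| + #|B :\: C|)%N.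
Proof.
apply: leq_trans (leq_card_setU _ _).
apply: subset_leq_card; apply/subsetP => x; rewrite !inE.
by case: (x \in A); case: (x \in B); case: (x \in C).
Qed.

Lemma key (R : realFieldType) (T : finType) (e : rel T) (alpha : R)
   (X Y : {set T}) w :
  quasi_equiv_class e alpha X -> quasi_equiv_class e alpha Y ->
  w \in Y -> w \notin X ->
  (#|X|%:R - #|X :\: Y|%:R - alpha * #|Y|%:R < (1 - 3 * alpha) * #|X|%:R :> R).
Proof.
move=> [_ HX] [HY _] wY wX.
have h1 := HX w wX. have h2 := HY w wY.
set N := w |: nbhd e w.
have e1 : nbhd e w :&: X = X :&: N.
  apply/setP => x; rewrite !inE; case: eqP => [->|]; first by rewrite (negbTE wX) !andbF.
  by rewrite andbC.
have hs := cardsID N X.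
have ht := tri X Y N.
have hsd := card_sd N Y.
rewrite e1 in h1.
have : (#|X|%:R <= #|X :&: N|%:R + #|X :\: Y|%:R + #|symdiff N Y|%:R :> R).
  rewrite -!natrD ler_nat -hs -addnA leq_add2l; apply: leq_trans ht _.
  by rewrite leq_add2l hsd leq_addl.
move=> h3; lra.
Qed.

Theorem proposition5p1 (R : realFieldType) (T : finType) (e : rel T)
    (alpha : R) (C1 C2 : {set T}) :
  simple_graph e ->
  0 <= alpha -> alpha < 1 / 3 ->
  quasi_equiv_class e alpha C1 -> quasi_equiv_class e alpha C2 ->
  C1 != C2 ->
  C1 :&: C2 = set0.
Proof.
move=> _ a0 a1 Q1 Q2 neq.
apply/eqP/negPn/negP => /set0Pn [v].
wlog le21 : C1 C2 Q1 Q2 neq / (#|C2| <= #|C1|)%N.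
  move=> W; case: (leqP #|C2| #|C1|) => h; first exact: W.
  by rewrite setIC; apply: W => //; [rewrite eq_sym | exact: ltnW].
rewrite inE => /andP [v1 v2].
have hd : (#|C1 :\: C2|%:R + #|C2 :\: C1|%:R <= alpha * (#|C1|%:R + #|C2|%:R) :> R).
  have h1 := Q1.1 v v1. have h2 := Q2.1 v v2.
  set N := v |: nbhd e v.
  rewrite card_sd in h1; rewrite card_sd in h2.
  have t1 := tri C1 N C2. have t2 := tri C2 N C1.
  rewrite natrD in h1; rewrite natrD in h2.
  have : (#|C1 :\: C2| + #|C2 :\: C1| <= (#|N :\: C1| + #|C1 :\: N|) + (#|N :\: C2| + #|C2 :\: N|))%N.
    by lia.
  rewrite -(ler_nat R) !natrD => h; lra.
have lb : (#|C2|%:R <= #|C1|%:R :> R) by rewrite ler_nat.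
case: (boolP (C2 :\: C1 == set0)) => [|/set0Pn [w]].
  rewrite setD_eq0 => sub21.
  have : exists w, w \in C1 :\: C2.
    apply/set0Pn; apply: contra neq; rewrite setD_eq0 => s12.
    by rewrite eqEsubset s12 sub21.
  case=> w; rewrite inE => /andP [w2 w1].
  have := key Q2 Q1 w1 w2.
  have -> : C2 :\: C1 = set0 by apply/eqP; rewrite setD_eq0.
  rewrite cards0 in hd *.
  have hd0 : (#|C2 :\: C1| = 0)%N by apply/eqP; rewrite cards_eq0 setD_eq0.
  rewrite hd0 in hd.
  move=> h.
  have hnn : (0 <= #|C1 :\: C2|%:R :> R) by [].
  have hc : (#|C1|%:R = #|C1 :\: C2|%:R + #|C2|%:R :> R).
    rewrite -natrD; congr (_%:R); rewrite -(cardsID C2 C1).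
    by rewrite (setIidPr sub21) addnC.
  set d := (#|C1 :\: C2|%:R : R) in hd hnn hc.
  rewrite hc in h hd.
  have h4 : alpha * d <= (1 - alpha) * d by nra.
  nra.
rewrite inE => /andP [w1 w2].
have := key Q1 Q2 w2 w1.
have : (0 <= #|C2 :\: C1|%:R :> R) by [].
move=> h0 h; nra.
Qed.
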